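(* Let $q$ be a prime power, $m$ a positive integer, and $n=q^m-1$. Let $x,y$ be integers with $1\le x,y<q^{\lceil m/2\rceil}+1$, $x\not\equiv0\pmod q$, $y\not\equiv 0\pmod q$, and $x\ne y$. Then the $q$-ary cyclotomic cosets $C_x=\{xq^\ell\bmod n\mid\ell\in\mathbf{Z}\}$ and $C_y$ are distinct (hence disjoint). *)

(* Defs.v *)
From mathcomp Require Import all_boot.

Set Implicit Arguments.
Unset Strict Implicit.
Unset Printing Implicit Defensive.

Definition prime_power (q : nat) : Prop :=
  exists p k : nat, prime p /\ 0 < k /\ q = p ^ k.

(* Exponents l range over nat; since
   gcd(q, n) = 1 when n = q^m - 1, q^m = 1 (mod n), so negative
   exponents give nothing new. *)
Definition cyclotomic_coset (q n x : nat) : nat -> Prop :=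
  fun z => exists l : nat, z = (x * q ^ l) %% n.

(* Main.v *)
Require Import Defs.
From mathcomp Require Import all_boot.
From mathcomp Require Import zify.

Lemma pow_mod (q m e : nat) : 0 < q -> 0 < m ->
  q ^ e = q ^ (e %% m) %[mod q ^ m - 1].
Proof.
move=> q0 m0.
have qm : q ^ m = (q ^ m - 1) + 1 by have := expn_gt0 q m; rewrite q0 /=; timeout 15 lia.
rewrite {1}(divn_eq e m) expnD (mulnC (e %/ m)) expnM.
have h1 : q ^ m %% (q ^ m - 1) = 1 %% (q ^ m - 1) by rewrite {1}qm modnDl.
by rewrite -modnMml -modnXm h1 modnXm exp1n modnMml mul1n.
Qed.

Lemma core (q m c j x y : nat) : 1 < q -> 0 < j -> j < m -> c.*2 <= m.+1 ->
  x < q ^ c -> y < q ^ c -> c < m -> ~~ (q %| x) -> ~~ (q %| y) ->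
  y = (x * q ^ j) %% (q ^ m - 1) -> False.
Proof.
move=> q1 j0 jm c2 xc yc cm nx ny hy.
set P := q ^ (m - j). set Q := q ^ j.
have PQ : q ^ m = P * Q by rewrite /P /Q -expnD subnK // ltnW.
have xm : x < P * Q by rewrite -PQ; apply: leq_trans xc _; rewrite leq_exp2l // ltnW.
have P0 : 0 < P by rewrite expn_gt0 ltnW.
have Q0 : 0 < Q by rewrite expn_gt0 ltnW.
have QE : q ^ j = Q by []. have PE : q ^ (m - j) = P by [].
rewrite QE in hy. clearbody P Q.
set a := x %/ P. set b := x %% P.
have xe : x = a * P + b by rewrite /a /b -divn_eq.
have bP : b < P by rewrite /b ltn_mod.
have aQ : a < Q by rewrite /a ltn_divLR // mulnC.
clearbody a b.
have qm1 : P * Q = (P * Q - 1) + 1 by timeout 15 lia.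
have e1 : x * Q = a * (P * Q - 1) + (a + b * Q).
  rewrite xe mulnDl -mulnA {1}qm1 mulnDr muln1 -addnA (mulnC P). done.
have hy' : y = (a + b * Q) %% (P * Q - 1) by rewrite hy PQ e1 modnMDl.
have bnd : a + b * Q <= P * Q - 1.
  have : b * Q <= (P - 1) * Q by rewrite leq_mul2r; apply/orP; right; rewrite subn1 -ltnS prednK.
  have : Q <= P * Q by rewrite leq_pmull.
  rewrite mulnBl mul1n; clear -aQ; timeout 15 lia.
have ylt : y < q ^ m - 1.
  have : q ^ c < q ^ m by rewrite ltn_exp2l.
  move=> h; clear -yc h; timeout 15 lia.
have yv : y = a + b * Q.
  move: bnd; rewrite leq_eqVlt => /orP [/eqP E| L].
    by move: hy'; rewrite E modnn => y0; rewrite y0 dvdn0 in ny.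
  by rewrite hy' modn_small.
have qQ : q %| Q by rewrite -QE dvdn_exp.
have qP : q %| P by rewrite -PE dvdn_exp ?subn_gt0.
have b1 : 0 < b.
  case: (posnP b) => [b0|//].
  by move: nx; rewrite xe b0 addn0 dvdn_mull.
have a1 : 0 < a.
  case: (posnP a) => [a0|//].
  by move: ny; rewrite yv a0 add0n dvdn_mull.
have jc : j < c.
  rewrite -(ltn_exp2l _ _ q1); apply: leq_ltn_trans yc.
  rewrite QE yv; clear -b1; timeout 15 nia.
have mjc : m - j < c.
  rewrite -(ltn_exp2l _ _ q1); apply: leq_ltn_trans xc.
  rewrite PE xe; clear -a1; timeout 15 nia.
clear -jc mjc c2; timeout 15 lia.
Qed.

Lemma mod_inj n x y : 0 < x -> x <= n -> 0 < y -> y <= n -> x %% n = y %% n -> x = y.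
Proof.
move=> x0 xn y0 yn.
case: (ltnP x n) => [xl|xg]; case: (ltnP y n) => [yl|yg].
- by rewrite !modn_small.
- have -> : y = n by apply/eqP; rewrite eqn_leq yn yg.
  by rewrite modnn modn_small // => E; rewrite E in x0.
- have -> : x = n by apply/eqP; rewrite eqn_leq xn xg.
  by rewrite modnn modn_small // => E; rewrite -E in y0.
- by move=> _; apply/eqP; rewrite eqn_leq (leq_trans xn yg) (leq_trans yn xg).
Qed.

Theorem mainTheorem5 (q m x y : nat) :
  prime_power q -> 0 < m ->
  let n := q ^ m - 1 in
  1 <= x -> x < q ^ ((m.+1)./2) + 1 ->
  1 <= y -> y < q ^ ((m.+1)./2) + 1 ->
  ~~ (q %| x) -> ~~ (q %| y) -> x != y ->
  ~ (forall z, cyclotomic_coset q n x z <-> cyclotomic_coset q n y z) /\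
  (forall z, cyclotomic_coset q n x z -> ~ cyclotomic_coset q n y z).
Proof.
move=> [p [k [pp [k0 qE]]]] m0 n x1 xc y1 yc nx ny xy.
have q1 : 1 < q by rewrite qE -(exp1n k) ltn_exp2r // prime_gt1.
set c := (m.+1)./2 in xc yc *.
have c0 : 0 < c by rewrite /c; case: (m) m0.
have qc : q %| q ^ c by rewrite dvdn_exp.
have xc' : x < q ^ c.
  have : x <= q ^ c by move: xc; rewrite addn1 ltnS.
  rewrite leq_eqVlt => /orP [/eqP E|//].
  by move: nx; rewrite E qc.
have yc' : y < q ^ c.
  have : y <= q ^ c by move: yc; rewrite addn1 ltnS.
  rewrite leq_eqVlt => /orP [/eqP E|//].
  by move: ny; rewrite E qc.
have c2 : c.*2 <= m.+1 by rewrite /c -{2}(odd_double_half m.+1); clear; timeout 15 lia.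
have cm : c <= m by move: c2; rewrite -addnn; clear; timeout 15 lia.
have qcm : q ^ c <= q ^ m by rewrite leq_exp2l // ltnW.
have disj : forall z, cyclotomic_coset q n x z -> ~ cyclotomic_coset q n y z.
  move=> z [l ->] [k' E].
  have E2 : x * q ^ (l + (m - 1) * k') = y %[mod n].
    rewrite expnD mulnA -modnMml E modnMml -mulnA -expnD.
    have -> : k' + (m - 1) * k' = k' * m by rewrite -{1}(mul1n k') -mulnDl addnC subnK // mulnC.
    have hqm : q ^ m = 1 %[mod n].
      have qm : q ^ m = n + 1 by rewrite /n; have := expn_gt0 q m; rewrite (ltnW q1) /=; clear; timeout 15 lia.
      by rewrite {1}qm modnDl.
    by rewrite (mulnC k') expnM -modnMmr -modnXm hqm modnXm exp1n modnMmr muln1.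
  move: E2; rewrite -modnMmr (pow_mod _ _ _ (ltnW q1) m0) modnMmr.
  set j := (l + (m - 1) * k') %% m => E2.
  have jm : j < m by rewrite /j ltn_mod.
  case: (posnP j) => [j0 | jpos].
    move: E2; rewrite j0 expn0 muln1 => E3.
    have xn : x <= n by rewrite /n; clear -xc' qcm; timeout 15 lia.
    have yn : y <= n by rewrite /n; clear -yc' qcm; timeout 15 lia.
    move: E3; rewrite -/n => E3; case/eqP: xy; exact: (mod_inj _ _ _ x1 xn y1 yn E3).
  have cm' : c < m by move: c2 jpos jm; clear; timeout 15 lia.
  have yn : y < n.
    have : q ^ c < q ^ m by rewrite ltn_exp2l.
    rewrite /n => h; clear -yc' h; timeout 15 lia.
  apply: (core _ _ _ _ _ _ q1 jpos jm c2 xc' yc' cm' nx ny).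
  by rewrite E2 modn_small.
split=> // H.
have hx : cyclotomic_coset q n x ((x * q ^ 0) %% n) by exists 0.
by apply: (disj _ hx); apply/H.
Qed.
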